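(* Let $\sigma,\eta>0$ and $\mathscr{C}$ be a family of balls as in the context. Let $B,B'\in\mathscr{C}$ with $B'\not\subset B^{(3)}$. Then \[ (1-\beta)|x_B-x_{B'}|\le|x-y|\le 2|x_B-x_{B'}|\quad\text{for all }x\in B,\ y\in B', \] where $\beta:=(1+2/\eta^2)^{-1/2}\in(0,1)$.
   Context: Cover: for constants $\sigma,\eta>0$, $\mathscr{C}$ is a family of closed balls in $\mathbb{R}^3$ with $\bigcup_{B\in\mathscr{C}}B=\mathbb{R}^3$ and $|B|\geq 4\pi/3$ for all $B\in\mathscr{C}$, such that (i) each ball in $\mathscr{C}$ intersects at most $\sigma$ balls in $\mathscr{C}$, and (ii) if $B,B'\in\mathscr{C}$ intersect then $\eta^{-1}\le |B|^{1/3}/|B'|^{1/3}\le\eta$. $x_B$ denotes the center of $B$. Layers: for $B\in\mathscr{C}$ set $B^{(0)}:=B$, $P^{(0)}:=\{B\}$, and for $n\ge1$, $P^{(n)}:=\{B'\in\mathscr{C}: B'\cap B^{(n-1)}\neq\emptyset\}$, $B^{(n)}:=\bigcup_{B'\in P^{(n)}}B'$. *)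

(* Defs.v *)
From HB Require Import structures.
From mathcomp Require Import all_boot all_order all_algebra.
From mathcomp Require Import all_classical all_reals all_analysis.
Set Implicit Arguments. Unset Strict Implicit. Unset Printing Implicit Defensive.
Import Order.TTheory GRing.Theory Num.Theory.
Local Open Scope ring_scope.
Local Open Scope classical_set_scope.

Section Balls.
Variable R : realType.

Definition enorm (x : 'rV[R]_3) : R := Num.sqrt (\sum_(i < 3) x ord0 i ^+ 2).

Definition ball3 := ('rV[R]_3 * R)%type.
Definition bcenter (B : ball3) : 'rV[R]_3 := fst B.
Definition bradius (B : ball3) : R := B.2.

Definition cball (B : ball3) : set 'rV[R]_3 :=
  [set x | enorm (x - bcenter B) <= bradius B].

Definition bvol (B : ball3) : R := 4 / 3 * pi * bradius B ^+ 3.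

Definition intersect (B B' : ball3) : Prop := cball B `&` cball B' !=set0.

Definition is_cover (sigma eta : R) (C : set ball3) : Prop :=
  [/\ (forall B, C B -> 0 < bradius B),
      (forall x : 'rV[R]_3, exists2 B, C B & cball B x),
      (forall B, C B -> 4 / 3 * pi <= bvol B),
      (forall B, C B -> forall s : seq ball3, uniq s ->
          (forall B', B' \in s -> C B' /\ intersect B B') ->
          (size s)%:R <= sigma) &
      (forall B B', C B -> C B' -> intersect B B' ->
          eta^-1 <= powR (bvol B) (1/3) / powR (bvol B') (1/3) <= eta)].

Fixpoint layer (C : set ball3) (B : ball3) (n : nat) : set 'rV[R]_3 :=
  match n with
  | 0 => cball B
  | n'.+1 => \bigcup_(B' in [set B' | C B' /\ cball B' `&` layer C B n' !=set0])
               cball B'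
  end.

Definition beta (eta : R) : R := powR (1 + 2 / eta ^+ 2) (- (1/2)).

End Balls.

(* Main.v *)
Require Import Defs.
From HB Require Import structures.
From mathcomp Require Import all_boot all_order all_algebra.
From mathcomp Require Import all_classical all_reals all_analysis.
From mathcomp Require Import ring lra.
Import Order.TTheory GRing.Theory Num.Theory.
Local Open Scope ring_scope.
Local Open Scope classical_set_scope.
Set Implicit Arguments. Unset Strict Implicit. Unset Printing Implicit Defensive.

Section Vec.
Variable R : realType.
Implicit Types (u v w : 'rV[R]_3).

Definition i0 : 'I_3 := @Ordinal 3 0 isT.
Definition i1 : 'I_3 := @Ordinal 3 1 isT.
Definition i2 : 'I_3 := @Ordinal 3 2 isT.

Definition sq v : R := v ord0 i0 ^+ 2 + v ord0 i1 ^+ 2 + v ord0 i2 ^+ 2.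

Lemma sum3 (F : 'I_3 -> R) : \sum_(i < 3) F i = F i0 + F i1 + F i2.
Proof.
rewrite !big_ord_recl big_ord0 addr0 addrA.
have -> : lift ord0 ord0 = i1 by apply/val_inj.
have -> : lift ord0 (lift ord0 ord0) = i2 by apply/val_inj.
by have -> : ord0 = i0 by apply/val_inj.
Qed.

Lemma enormE v : enorm v = Num.sqrt (sq v).
Proof. by rewrite /enorm sum3. Qed.

Lemma sq_ge0 v : 0 <= sq v.
Proof. rewrite /sq; nra. Qed.

Lemma enorm_ge0 v : 0 <= enorm v.
Proof. by rewrite enormE sqrtr_ge0. Qed.

Lemma enorm_sq v : enorm v ^+ 2 = sq v.
Proof. by rewrite enormE sqr_sqrtr // sq_ge0. Qed.

Lemma le_enorm v t : 0 <= t -> (enorm v <= t) = (sq v <= t ^+ 2).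
Proof.
move=> t0; have -> : enorm v <= t = (enorm v <= Num.sqrt (t ^+ 2)).
  by rewrite sqrtr_sqr ger0_norm.
by rewrite enormE ler_sqrt ?sqr_ge0.
Qed.

Lemma lt_enorm v t : 0 <= t -> (t < enorm v) = (t ^+ 2 < sq v).
Proof.
move=> t0; rewrite !ltNge le_enorm //.
Qed.

Lemma le_enorm2 u v : (enorm u <= enorm v) = (sq u <= sq v).
Proof. by rewrite !enormE ler_sqrt ?sq_ge0. Qed.

Lemma sqB u v : sq (u - v) = (u ord0 i0 - v ord0 i0) ^+ 2 + (u ord0 i1 - v ord0 i1) ^+ 2
  + (u ord0 i2 - v ord0 i2) ^+ 2.
Proof. by rewrite /sq !mxE. Qed.

Lemma enormN v : enorm (- v) = enorm v.
Proof. by rewrite !enormE /sq !mxE !sqrrN. Qed.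

Lemma enormBC u v : enorm (u - v) = enorm (v - u).
Proof. by rewrite -enormN opprB. Qed.

Lemma enormZ (k : R) v : enorm (k *: v) = `|k| * enorm v.
Proof.
rewrite !enormE /sq !mxE -sqrtr_sqr -sqrtrM ?sqr_ge0 //; congr Num.sqrt.
by rewrite !exprMn; ring.
Qed.

Lemma enormD u v : enorm (u + v) <= enorm u + enorm v.
Proof.
rewrite le_enorm ?addr_ge0 ?enorm_ge0 // sqrrD !enorm_sq.
set a0 := u ord0 i0; set a1 := u ord0 i1; set a2 := u ord0 i2.
set b0 := v ord0 i0; set b1 := v ord0 i1; set b2 := v ord0 i2.
have -> : sq (u + v) = sq u + sq v + 2 * (a0 * b0 + a1 * b1 + a2 * b2).
  by rewrite /sq !mxE -/a0 -/a1 -/a2 -/b0 -/b1 -/b2; ring.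
suff : a0 * b0 + a1 * b1 + a2 * b2 <= enorm u * enorm v.
  move=> h; rewrite -mulr_natl; lra.
have [hn|hp] := lerP (a0 * b0 + a1 * b1 + a2 * b2) 0.
  by apply: le_trans hn _; rewrite mulr_ge0 ?enorm_ge0.
rewrite !enormE -sqrtrM ?sq_ge0 //.
rewrite -[X in X <= _](ger0_norm (ltW hp)) -sqrtr_sqr ler_sqrt;
  last by rewrite mulr_ge0 ?sq_ge0.
rewrite /sq -/a0 -/a1 -/a2 -/b0 -/b1 -/b2 -subr_ge0.
have -> : (a0 ^+ 2 + a1 ^+ 2 + a2 ^+ 2) * (b0 ^+ 2 + b1 ^+ 2 + b2 ^+ 2) -
  (a0 * b0 + a1 * b1 + a2 * b2) ^+ 2 = (a0 * b1 - a1 * b0) ^+ 2 +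
  (a0 * b2 - a2 * b0) ^+ 2 + (a1 * b2 - a2 * b1) ^+ 2 by ring.
by rewrite !addr_ge0 ?sqr_ge0.
Qed.

Lemma enorm_tri u v w : enorm (u - w) <= enorm (u - v) + enorm (v - w).
Proof.
by have := enormD (u - v) (v - w); rewrite addrA subrK.
Qed.

End Vec.

Section Geo.
Variable R : realType.
Implicit Types (u v w : 'rV[R]_3) (A B : ball3 R).

Lemma intersect_sym A B : intersect A B -> intersect B A.
Proof. by case=> x [h1 h2]; exists x. Qed.

Lemma meet_of_dist A B : 0 <= bradius A -> 0 <= bradius B ->
  0 < bradius A + bradius B ->
  enorm (bcenter A - bcenter B) <= bradius A + bradius B -> intersect A B.
Proof.
move=> hA hB hs hd.
set k := bradius A / (bradius A + bradius B).
exists (bcenter A + k *: (bcenter B - bcenter A)); split.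
- rewrite /cball /= addrC addKr enormZ enormBC.
  rewrite ger0_norm ?divr_ge0 //; last exact: ltW.
  rewrite /k mulrAC ler_pdivrMr //.
  by rewrite ler_wpM2l.
- rewrite /cball /=.
  have -> : bcenter A + k *: (bcenter B - bcenter A) - bcenter B =
      (bradius B / (bradius A + bradius B)) *: (bcenter A - bcenter B).
    apply/rowP => i; rewrite !mxE /k; field.
    by rewrite lt0r_neq0.
  rewrite enormZ ger0_norm ?divr_ge0 //; last exact: ltW.
  rewrite mulrAC ler_pdivrMr //.
  by rewrite ler_wpM2l.
Qed.

Lemma dist_of_disjoint A B : 0 < bradius A -> 0 < bradius B ->
  ~ intersect A B -> bradius A + bradius B < enorm (bcenter A - bcenter B).
Proof.
move=> hA hB hn; rewrite ltNge; apply/negP => h; apply: hn.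
by apply: meet_of_dist => //; [exact: ltW|exact: ltW|exact: addr_gt0].
Qed.

Lemma alg_core (tau rho r r' e D A Bv Z : R) :
  0 <= tau <= 1 -> 0 < r' <= r -> 0 <= e -> e * r <= rho -> 0 < rho ->
  Z <= rho ^+ 2 -> (rho + r) ^+ 2 < A -> (rho + r') ^+ 2 < Bv ->
  (1 - tau) * A + tau * Bv = Z + tau * (1 - tau) * D ->
  (1 + 2 * e) * (r + r') ^+ 2 < D.
Proof.
move=> /andP[t0 t1] /andP[r'0 rr'] e0 er rho0 hZ hA hB hid.
have h1 : (1 - tau) * (rho + r) ^+ 2 + tau * (rho + r') ^+ 2 < (1 - tau) * A + tau * Bv.
  rewrite -subr_gt0.
  have -> : (1 - tau) * A + tau * Bv - ((1 - tau) * (rho + r) ^+ 2 + tau * (rho + r') ^+ 2)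
    = (1 - tau) * (A - (rho + r) ^+ 2) + tau * (Bv - (rho + r') ^+ 2) by ring.
  have ha : 0 < A - (rho + r) ^+ 2 by rewrite subr_gt0.
  have hb : 0 < Bv - (rho + r') ^+ 2 by rewrite subr_gt0.
  have [tl|te] := ltrP tau 1.
    apply: ltr_pwDl; first by rewrite mulr_gt0 // subr_gt0.
    by rewrite mulr_ge0 // ltW.
  have -> : tau = 1 by apply/eqP; rewrite eq_le t1 te.
  by rewrite subrr mul0r add0r mul1r.
have h2 : (1 - tau) * (r ^+ 2 + 2 * rho * r) + tau * (r' ^+ 2 + 2 * rho * r')
    < tau * (1 - tau) * D.
  have hx : (1 - tau) * (rho + r) ^+ 2 + tau * (rho + r') ^+ 2 = rho ^+ 2 +
    ((1 - tau) * (r ^+ 2 + 2 * rho * r) + tau * (r' ^+ 2 + 2 * rho * r')) by ring.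
  lra.
have r0 : 0 < r by apply: lt_le_trans rr'.
have h3 : 2 * e * r ^+ 2 <= 2 * rho * r.
  have -> : 2 * e * r ^+ 2 = (2 * r) * (e * r) by ring.
  have -> : 2 * rho * r = (2 * r) * rho by ring.
  by rewrite ler_wpM2l // mulr_ge0 // ltW.
have h4 : 2 * e * r' ^+ 2 <= 2 * rho * r'.
  have -> : 2 * e * r' ^+ 2 = (2 * r') * (e * r') by ring.
  have -> : 2 * rho * r' = (2 * r') * rho by ring.
  apply: ler_wpM2l; first by rewrite mulr_ge0 // ltW.
  by apply: (le_trans _ er); rewrite ler_wpM2l.
have h5 : (1 + 2 * e) * ((1 - tau) * r ^+ 2 + tau * r' ^+ 2) < tau * (1 - tau) * D.
  nra.
have h6 : tau * (1 - tau) * (r + r') ^+ 2 <= (1 - tau) * r ^+ 2 + tau * r' ^+ 2.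
  have -> : (1 - tau) * r ^+ 2 + tau * r' ^+ 2 = tau * (1 - tau) * (r + r') ^+ 2
     + ((1 - tau) * r - tau * r') ^+ 2 by ring.
  by rewrite lerDl sqr_ge0.
have h7 : 0 < tau * (1 - tau).
  rewrite lt0r mulr_ge0 ?subr_ge0 // andbT mulf_neq0 //.
  - by apply/eqP => t; move: h5; rewrite t; nra.
  - by apply/eqP => t; move: h5; rewrite t; nra.
nra.
Qed.

End Geo.

Section Key.
Variable R : realType.

Lemma key_alg (xX xY c : 'rV[R]_3) (tau rho r r' e : R) :
  0 <= tau <= 1 -> 0 < r' <= r -> 0 <= e -> e * r <= rho -> 0 < rho ->
  enorm (c - (xX + tau *: (xY - xX))) <= rho ->
  rho + r < enorm (c - xX) -> rho + r' < enorm (c - xY) ->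
  (1 + 2 * e) * (r + r') ^+ 2 < enorm (xX - xY) ^+ 2.
Proof.
move=> ht hr e0 er rho0 hz hx hy.
have /andP[r'0 rr'] := hr.
have r0 : 0 < r by apply: lt_le_trans rr'.
rewrite enorm_sq.
apply: (@alg_core _ tau rho r r' e (sq (xX - xY)) (sq (c - xX)) (sq (c - xY))
          (sq (c - (xX + tau *: (xY - xX))))) => //.
- by rewrite -le_enorm // ltW.
- by rewrite -lt_enorm // addr_ge0 // ltW.
- by rewrite -lt_enorm // addr_ge0 // ltW.
- rewrite !sqB !mxE; ring.
Qed.

End Key.

Section Cover.
Variable R : realType.
Variables (sigma eta : R) (C : set (ball3 R)).
Hypothesis hsigma : 0 < sigma.
Hypothesis heta : 0 < eta.
Hypothesis hC : is_cover sigma eta C.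

Lemma vol13 (B : ball3 R) : 0 <= bradius B ->
  powR (bvol B) (1/3) = powR (4 / 3 * pi) (1/3) * bradius B.
Proof.
move=> h; rewrite /bvol powRM ?mulr_ge0 ?exprn_ge0 ?pi_ge0 //.
congr (_ * _).
rewrite -(@powR_mulrn _ (bradius B) 3 h) -powRrM.
by rewrite mul1r mulfV ?powRr1 // pnatr_eq0.
Qed.

Lemma rad_gt0 (B : ball3 R) : C B -> 0 < bradius B.
Proof. by case: hC => h _ _ _ _; apply: h. Qed.

Lemma ratio_le (A B : ball3 R) : C A -> C B -> intersect A B ->
  bradius A <= eta * bradius B.
Proof.
move=> hA hB hAB.
case: hC => _ _ _ _ h5.
have /andP[_ h] := h5 A B hA hB hAB.
have a0 := rad_gt0 hA; have b0 := rad_gt0 hB.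
rewrite (vol13 (ltW a0)) (vol13 (ltW b0)) in h.
have k0 : 0 < powR (4 / 3 * pi) (1/3 : R).
  by apply: powR_gt0; rewrite mulr_gt0 ?pi_gt0.
move: h; rewrite invfM mulrACA mulfV ?lt0r_neq0 // mul1r.
by rewrite ler_pdivrMr // mulrC.
Qed.

Lemma rad_ge1 (B : ball3 R) : C B -> 1 <= bradius B.
Proof.
move=> hB; have b0 := rad_gt0 hB.
case: hC => _ _ h3 _ _.
have := h3 B hB; rewrite /bvol.
have p0 : 0 < 4 / 3 * pi :> R by rewrite mulr_gt0 ?pi_gt0.
rewrite -[X in X <= _]mulr1 ler_pM2l // => h.
rewrite leNgt; apply/negP => hlt.
have : bradius B ^+ 3 < 1 by rewrite exprn_ilt1 // ltW.
by rewrite ltNge h.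
Qed.


Definition nearb (q : 'rV[R]_3) (e : R) (O : ball3 R) :=
  exists w, cball O w /\ enorm (w - q) < e.

Definition sgnpat (v : 'rV[R]_3) : bool * bool * bool :=
  (0 <= v ord0 i0, 0 <= v ord0 i1, 0 <= v ord0 i2).

Definition cls (q : 'rV[R]_3) (k : bool * bool * bool) (O : ball3 R) :=
  exists c' : 'rV[R]_3, (forall p : 'rV[R]_3, enorm (p - c') <= 1 -> cball O p) /\
    enorm (c' - q) <= 5 / 4 /\ sgnpat (c' - q) = k.

Lemma cls_ex q O : C O -> nearb q (1/4) O -> exists k, cls q k O.
Proof.
move=> hO [w [hw hwq]].
have r1 := rad_ge1 hO; have r0 := rad_gt0 hO.
set c := bcenter O; set rho := bradius O.
set k := (rho - 1) / rho.
have k0 : 0 <= k by rewrite divr_ge0 // ?subr_ge0 // ltW.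
set c' := c + k *: (w - c).
exists (sgnpat (c' - q)); exists c'; split; last split => //.
- move=> p hp; rewrite /cball.
  apply: le_trans (enorm_tri _ c' _) _.
  have -> : c' - c = k *: (w - c) by rewrite /c' addrC addKr.
  rewrite enormZ ger0_norm //.
  have : k * enorm (w - c) <= k * rho by rewrite ler_wpM2l.
  have -> : k * rho = rho - 1 by rewrite /k mulfVK // lt0r_neq0.
  move: hp; rewrite -/c -/rho; lra.
- apply: le_trans (enorm_tri _ w _) _.
  have -> : c' - w = rho^-1 *: (c - w).
    apply/rowP => i; rewrite !mxE /k; field; exact: lt0r_neq0.
  rewrite enormZ ger0_norm ?invr_ge0 ?ltW // enormBC.
  have : rho^-1 * enorm (w - c) <= 1.
    by rewrite mulrC ler_pdivrMr // mul1r.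
  move: hwq; lra.
Qed.

Lemma sq_same_sign (a b : R) : (0 <= a) = (0 <= b) -> (a - b) ^+ 2 <= a ^+ 2 + b ^+ 2.
Proof.
move=> h.
have hab : 0 <= a * b.
  have [ha|ha] := lerP 0 a.
    by rewrite mulr_ge0 // -h.
  have hb : b < 0 by rewrite ltNge -h -ltNge.
  by rewrite nmulr_rge0 // ltW.
rewrite sqrrB; lra.
Qed.

Lemma cls_meet q k O1 O2 : cls q k O1 -> cls q k O2 -> intersect O1 O2.
Proof.
move=> [c1 [h1 [n1 s1]]] [c2 [h2 [n2 s2]]].
have d2 : enorm (c1 - c2) <= 2.
  rewrite le_enorm //.
  have e12 := s1; rewrite -s2 in e12.
  move: e12; rewrite /sgnpat => -[e0 e1 e2].
  have : sq (c1 - q) <= (5/4) ^+ 2 by rewrite -le_enorm.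
  have : sq (c2 - q) <= (5/4) ^+ 2 by rewrite -le_enorm.
  rewrite !sqB.
  move: (sq_same_sign e0) (sq_same_sign e1) (sq_same_sign e2); rewrite !mxE.
  set a0 := c1 ord0 i0; set a1 := c1 ord0 i1; set a2 := c1 ord0 i2.
  set b0 := c2 ord0 i0; set b1 := c2 ord0 i1; set b2 := c2 ord0 i2.
  set q0 := q ord0 i0; set q1 := q ord0 i1; set q2 := q ord0 i2.
  have -> : a0 - b0 = (a0 - q0) - (b0 - q0) by ring.
  have -> : a1 - b1 = (a1 - q1) - (b1 - q1) by ring.
  have -> : a2 - b2 = (a2 - q2) - (b2 - q2) by ring.
  lra.
exists ((1/2 : R) *: (c1 + c2)); split.
- apply: h1.
  have -> : (1/2 : R) *: (c1 + c2) - c1 = (1/2 : R) *: (c2 - c1).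
    by apply/rowP => i; rewrite !mxE; field.
  by rewrite enormZ enormBC ger0_norm //; lra.
- apply: h2.
  have -> : (1/2 : R) *: (c1 + c2) - c2 = (1/2 : R) *: (c1 - c2).
    by apply/rowP => i; rewrite !mxE; field.
  by rewrite enormZ ger0_norm //; lra.
Qed.

Lemma count_cover (T : eqType) (I : finType) (P : I -> pred T) (s : seq T) :
  (forall x, x \in s -> exists k, P k x) ->
  (size s <= \sum_(k : I) count (P k) s)%N.
Proof.
elim: s => [|a s IH] H; first by [].
rewrite /= big_split /=.
have [k0 hk0] := H a (mem_head _ _).
rewrite -add1n leq_add //; last first.
  by apply: IH => x hx; apply: H; rewrite inE hx orbT.
by rewrite (bigD1 k0) //= hk0.
Qed.

Lemma near_bound q (s : seq (ball3 R)) : uniq s ->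
  (forall O, O \in s -> C O /\ nearb q (1/4) O) -> (size s)%:R <= 8 * sigma.
Proof.
move=> us hs.
pose P k := fun O => `[< cls q k O >].
have hcov := @count_cover _ _ P s.
have hle : (size s <= \sum_(k : bool * bool * bool) count (P k) s)%N.
  apply: hcov => x hx; have [hC1 hn] := hs x hx.
  by have [k hk] := cls_ex hC1 hn; exists k; apply/asboolP.
have hk : forall k, (count (P k) s)%:R <= sigma.
  move=> k; rewrite -size_filter.
  case E : (seq.filter (P k) s) => [|O0 t]; first by rewrite /= ltW.
  have O0in : O0 \in seq.filter (P k) s by rewrite E mem_head.
  move: (O0in); rewrite mem_filter => /andP[/asboolP p0 O0s].
  have [cO0 _] := hs O0 O0s.
  case: hC => _ _ _ h4 _.
  apply: (h4 O0 cO0); first by rewrite -E filter_uniq.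
  move=> B' hB'; rewrite -E mem_filter in hB'.
  move: hB' => /andP[/asboolP pB' B's].
  by split; [exact: (hs B' B's).1 | exact: cls_meet p0 pB'].
have hle' : (size s)%:R <= (\sum_(k : bool * bool * bool) count (P k) s)%:R :> R.
  by rewrite ler_nat.
apply: le_trans hle' _.
rewrite natr_sum.
apply: le_trans (ler_sum _ (fun k _ => hk k)) _.
by rewrite sumr_const !card_prod card_bool mulr_natl.
Qed.


Definition validq q (s : seq (ball3 R)) :=
  uniq s /\ (forall O, O \in s -> C O /\ nearb q (1/4) O).

Lemma finite_near q : exists s, validq q s /\
  (forall O, C O -> nearb q (1/4) O -> O \in s).
Proof.
pose P n := `[< exists s, validq q s /\ size s = n >].
have P0 : exists n, P n by exists 0%N; apply/asboolP; exists [::]; split.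
have s0 : 0 <= 8 * sigma by rewrite mulr_ge0 // ltW.
set M := Num.Def.archi_bound (8 * sigma).
have hM : 8 * sigma < M%:R by apply: archi_boundP.
have ub : forall n, P n -> (n <= M)%N.
  move=> n /asboolP [s [[us hs] <-]].
  have := near_bound us hs => h.
  have : (size s)%:R < M%:R :> R by apply: le_lt_trans hM.
  by rewrite ltr_nat => /ltnW.
case: (ex_maxnP P0 ub) => n /asboolP [s [[us hs] sz]] hmax.
exists s; split; first by split.
move=> O hO hn; apply/negPn/negP => hOs.
have : P (size (O :: s)).
  apply/asboolP; exists (O :: s); split => //; split.
    by rewrite /= hOs.
  move=> B'; rewrite inE => /orP[/eqP -> //|]; exact: hs.
move=> /hmax; rewrite /= sz; by rewrite ltnn.
Qed.

Lemma min_seq q (s : seq (ball3 R)) : exists2 e, 0 < e & e <= 1/4 /\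
  forall O, O \in s -> ~ cball O q -> e <= enorm (q - bcenter O) - bradius O.
Proof.
elim: s => [|a s [e e0 [e1 he]]].
  by exists (1/4) => //; split => // O; rewrite in_nil.
case: (pselect (cball a q)) => ha.
  exists e => //; split => // O; rewrite inE => /orP[/eqP -> //|]; exact: he.
have da : 0 < enorm (q - bcenter a) - bradius a.
  by rewrite subr_gt0 ltNge; apply/negP.
have [el|eg] := lerP e (enorm (q - bcenter a) - bradius a).
  exists e => //; split => // O; rewrite inE => /orP[/eqP -> //|]; exact: he.
exists (enorm (q - bcenter a) - bradius a) => //; split.
  exact: le_trans (ltW eg) e1.
move=> O; rewrite inE => /orP[/eqP -> //|] hO hq.
exact: le_trans (ltW eg) (he O hO hq).
Qed.

Lemma LF q : exists2 e, 0 < e &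
  forall O, C O -> nearb q e O -> cball O q.
Proof.
have [s [[us hs] hall]] := finite_near q.
have [e e0 [e1 he]] := min_seq q s.
exists e => // O hO [w [hw hwq]].
have hn : nearb q (1/4) O by exists w; split => //; apply: lt_le_trans e1.
have Os := hall O hO hn.
case: (pselect (cball O q)) => // hq.
have h1 := he O Os hq.
have h2 := enorm_tri q w (bcenter O).
rewrite enormBC in hwq.
have h3 : enorm (w - bcenter O) <= bradius O := hw.
exfalso; lra.
Qed.


Definition chain (X Y : ball3 R) := exists A1 A2, C A1 /\ C A2 /\
  intersect X A1 /\ intersect A1 A2 /\ intersect A2 Y.

Lemma enorm0 : enorm (0 : 'rV[R]_3) = 0.
Proof. by rewrite -(scale0r (0 : 'rV[R]_3)) enormZ normr0 mul0r. Qed.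

Lemma center_in (X : ball3 R) : C X -> cball X (bcenter X).
Proof. by move=> hX; rewrite /cball /= subrr enorm0 ltW // rad_gt0. Qed.

Lemma self_int (X : ball3 R) : C X -> intersect X X.
Proof. by move=> hX; exists (bcenter X); split; apply: center_in. Qed.

Lemma segD (xX xY : 'rV[R]_3) (a b : R) :
  (xX + a *: (xY - xX)) - (xX + b *: (xY - xX)) = (a - b) *: (xY - xX).
Proof. by apply/rowP => i; rewrite !mxE; ring. Qed.

Lemma mainG (X Y : ball3 R) : C X -> C Y -> bradius Y <= bradius X ->
  ~ chain X Y ->
  (1 + 2 * (eta ^+ 2)^-1) * (bradius X + bradius Y) ^+ 2 <
    enorm (bcenter X - bcenter Y) ^+ 2.
Proof.
move=> hX hY hYX hch.
set xX := bcenter X; set xY := bcenter Y.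
set d := enorm (xY - xX).
have d0 : 0 <= d by apply: enorm_ge0.
pose seg (t : R) := xX + t *: (xY - xX).
have segn : forall a b, enorm (seg a - seg b) = `|a - b| * d.
  by move=> a b; rewrite /seg segD enormZ.
pose X1 p := exists A, C A /\ intersect X A /\ cball A p.
pose K := [set t : R | (0 <= t <= 1) /\ X1 (seg t)].
have K0 : K 0.
  split; first by rewrite lexx ler01.
  exists X; split => //; split; first exact: self_int.
  by rewrite /seg scale0r addr0; apply: center_in.
have Kub : ubound K 1 by move=> t [/andP[_ ->]].
have hsup : has_sup K by split; [exists 0 | exists 1].
set s := sup K.
have s0 : 0 <= s by apply: sup_upper_bound.
have s1 : s <= 1 by apply: ge_sup => //; exists 0.
set q := seg s.
have [e e0 hLF] := LF q.
set dl := e / (d + 1).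
have dl0 : 0 < dl by rewrite divr_gt0 // ltr_wpDl.
have dle : forall t, 0 <= t <= dl -> t * d < e.
  move=> t /andP[t0 t1].
  have : t * d <= dl * d by rewrite ler_wpM2r.
  have : dl * d < e.
    rewrite /dl mulrAC ltr_pdivrMr ?ltr_wpDl // ltr_pM2l //.
    by rewrite ltrDl.
  lra.
have [t1 Kt1 ht1] := sup_adherent dl0 hsup.
have t1s : t1 <= s by apply: sup_upper_bound.
have ht1' : s - dl < t1 := ht1.
have [_ [A1 [cA1 [iA1 hA1]]]] := Kt1.
have A1q : cball A1 q.
  apply: hLF => //; exists (seg t1); split => //.
  rewrite segn ler0_norm ?subr_le0 // opprB; apply: dle.
  by rewrite subr_ge0 t1s /=; lra.
have sl1 : s < 1.
  rewrite lt_neqAle s1 andbT; apply/eqP => es.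
  apply: hch; exists X, A1; split => //; split => //; split; first exact: self_int.
  split => //; exists xY; split.
    by move: A1q; rewrite /q /seg es scale1r addrC subrK.
  exact: center_in.
set m := Order.min dl (1 - s).
have m0 : 0 < m by rewrite lt_min dl0 subr_gt0.
have mdl : m <= dl by rewrite ge_min lexx.
have m1 : m <= 1 - s by rewrite ge_min lexx orbT.
set t2 := s + m / 2.
have [Ob cO hO] : exists2 Ob, C Ob & cball Ob (seg t2).
  by case: hC => _ h2 _ _ _; apply: h2.
have Oq : cball Ob q.
  apply: hLF => //; exists (seg t2); split => //.
  rewrite segn ger0_norm; last by rewrite /t2 addrAC subrr add0r; lra.
  apply: dle; rewrite /t2 addrAC subrr add0r; lra.
have nXO : ~ intersect X Ob.
  move=> hXO.
  have : K t2.
    split; first by apply/andP; split; rewrite /t2; lra.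
    by exists Ob.
  move=> /sup_upper_bound => /(_ hsup); rewrite -/s /t2; lra.
have nOY : ~ intersect Ob Y.
  move=> hOY; apply: hch; exists A1, Ob; split => //; split => //; split => //.
  by split => //; exists q.
have r1 : bradius X <= eta * bradius A1 by apply: ratio_le.
have r2 : bradius A1 <= eta * bradius Ob.
  by apply: ratio_le => //; exists q.
have rO := rad_gt0 cO; have rX := rad_gt0 hX; have rY := rad_gt0 hY.
have er : (eta ^+ 2)^-1 * bradius X <= bradius Ob.
  rewrite mulrC ler_pdivrMr ?exprn_gt0 //.
  apply: le_trans r1 _; rewrite expr2 [bradius Ob * _]mulrC -mulrA; apply: ler_wpM2l => //; exact: ltW.
have dOX := dist_of_disjoint rO rX (fun h => nXO (intersect_sym h)).
have dOY := dist_of_disjoint rO rY nOY.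
apply: (@key_alg _ xX xY (bcenter Ob) t2 (bradius Ob) (bradius X) (bradius Y) ((eta ^+ 2)^-1)).
- by apply/andP; split; rewrite /t2; lra.
- by rewrite rY hYX.
- by rewrite invr_ge0 exprn_ge0 // ltW.
- exact: er.
- exact: rO.
- by rewrite enormBC.
- exact: dOX.
- exact: dOY.
Qed.

End Cover.

Unset Implicit Arguments.

Lemma chain_layer (R : realType) (sigma eta : R) (C : set (ball3 R)) (B B' : ball3 R) :
  C B' -> chain C B B' -> cball B' `<=` layer C B 3.
Proof.
move=> cB' [A1 [A2 [cA1 [cA2 [i1 [i2 i3]]]]]] x hx.
have L1 : cball A1 `<=` layer C B 1.
  move=> y hy; exists A1 => //; split => //.
  by case: i1 => z [z1 z2]; exists z; split.
have L2 : cball A2 `<=` layer C B 2.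
  move=> y hy; exists A2 => //; split => //.
  by case: i2 => z [z1 z2]; exists z; split => //; apply: L1.
exists B' => //; split => //.
by case: i3 => z [z1 z2]; exists z; split => //; apply: L2.
Qed.

Lemma chain_rev (R : realType) (C : set (ball3 R)) (B B' : ball3 R) :
  chain C B' B -> chain C B B'.
Proof.
move=> [A1 [A2 [cA1 [cA2 [i1 [i2 i3]]]]]].
exists A2, A1; do !split => //; exact: intersect_sym.
Qed.

Theorem lemma3p4 (R : realType) (sigma eta : R) (C : set (ball3 R))
  (hsigma : 0 < sigma) (heta : 0 < eta) (hC : is_cover sigma eta C)
  (B B' : ball3 R) (hB : C B) (hB' : C B')
  (hnot : ~ (cball B' `<=` layer C B 3)) :
  (0 < beta eta < 1) /\
  (forall x y : 'rV[R]_3, cball B x -> cball B' y ->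
     (1 - beta eta) * enorm (bcenter B - bcenter B') <= enorm (x - y) /\
     enorm (x - y) <= 2 * enorm (bcenter B - bcenter B')).
Proof.
have nc1 : ~ chain C B B' by move=> h; apply: hnot; apply: chain_layer.
have nc2 : ~ chain C B' B by move=> h; apply: nc1; apply: chain_rev.
set u := 1 + 2 / eta ^+ 2.
have u1 : 1 < u by rewrite /u ltrDl divr_gt0 // exprn_gt0.
have su1 : 1 < Num.sqrt u by rewrite -sqrtr1 ltr_sqrt // (lt_trans ltr01).
have su0 : 0 < Num.sqrt u by apply: lt_trans su1.
have hb : beta eta = (Num.sqrt u)^-1.
  by rewrite /beta -/u powRN -powR12_sqrt ?div1r // ltW // (lt_trans ltr01).
have b0 : 0 < beta eta by rewrite hb invr_gt0.
have b1 : beta eta < 1 by rewrite hb invf_lt1.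
split; first by rewrite b0 b1.
set r := bradius B; set r' := bradius B'.
set D := enorm (bcenter B - bcenter B').
have D0 : 0 <= D by apply: enorm_ge0.
have r0 : 0 < r := rad_gt0 hC hB.
have r'0 : 0 < r' := rad_gt0 hC hB'.
have H : u * (r + r') ^+ 2 < D ^+ 2.
  have [le|lt] := lerP r' r.
    exact: (mainG hsigma heta hC hB hB' le nc1).
  have := mainG hsigma heta hC hB' hB (ltW lt) nc2.
  by rewrite -/r -/r' -/u [r' + r]addrC enormBC.
have H2 : Num.sqrt u * (r + r') < D.
  rewrite ltNge; apply/negP => hle.
  have e2 : (Num.sqrt u * (r + r')) ^+ 2 = u * (r + r') ^+ 2.
    by rewrite exprMn sqr_sqrtr // ltW // (lt_trans ltr01).
  have s0 : 0 <= Num.sqrt u * (r + r') by rewrite mulr_ge0 // ?ltW // addr_gt0.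
  move: H; rewrite -e2 => H; nra.
have H3 : r + r' < beta eta * D.
  by rewrite hb mulrC -(mulr1 (r + r')) -(mulfV (lt0r_neq0 su0)) mulrA ltr_pM2r ?invr_gt0 // mulrC.
have H4 : beta eta * D <= D by rewrite ler_piMl // ltW.
move=> x y hx hy.
have hx' : enorm (x - bcenter B) <= r := hx.
have hy' : enorm (y - bcenter B') <= r' := hy.
have t1 := enorm_tri x (bcenter B) y.
have t2 := enorm_tri (bcenter B) (bcenter B') y.
have t3 := enorm_tri (bcenter B) x (bcenter B').
have t4 := enorm_tri x y (bcenter B').
have a1 : enorm (bcenter B - x) = enorm (x - bcenter B) := enormBC _ _.
have a2 : enorm (bcenter B' - y) = enorm (y - bcenter B') := enormBC _ _.
rewrite -/D in t2 t3.
split; last by lra.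
rewrite mulrBl mul1r; lra.
Qed.
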